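(* Let $P$ and $C$ be causal stable systems on $\mathcal{L}_{2e+}^n$ such that the feedback system $P\#C$ is well-posed. If $\theta_e(P)+\theta_e(C)<\pi$, then $P\#C|_{e_2=0}$ is stable.
   Context: $\mathcal{L}_2^n$: measurable $u:\mathbb{R}\to\mathbb{R}^n$ with $\|u\|_2^2=\int|u(t)|^2dt<\infty$, inner product $\langle u,v\rangle=\int u(t)^Tv(t)\,dt$; $\mathcal{L}_{2+}=\{u\in\mathcal{L}_2:u(t)=0\ \text{for}\ t<0\}$. For $T\ge0$, $(\Gamma_Tu)(t)=u(t)$ for $t\le T$, $0$ for $t>T$, $u_T=\Gamma_Tu$; $\mathcal{L}_{2e+}=\{u:u_T\in\mathcal{L}_{2+}\ \forall T\ge0\}$. A system is an operator $P:\mathcal{L}_{2e+}\to\mathcal{L}_{2e+}$ with $P0=0$, $P\ne0$; causal if $\Gamma_TP=\Gamma_TP\Gamma_T$ for all $T\ge0$; a causal system is stable if $Pu\in\mathcal{L}_{2+}$ for all $u\in\mathcal{L}_{2+}$ and $\sup_{0\ne u\in\mathcal{L}_{2+}}\|Pu\|_2/\|u\|_2<\infty$. The $\mathcal{L}_{2e}$ singular angle $\theta_e(P)\in[0,\pi]$ is given by $\cos\theta_e(P)=\inf\{\langle u_T,(Pu)_T\rangle/(\|u_T\|_2\|(Pu)_T\|_2): u\in\mathcal{L}_{2e+},\ T>0,\ \|u_T\|_2\ne0,\ \|(Pu)_T\|_2\ne0\}$. The feedback system $P\#C$: $u_1=e_1-y_2$, $u_2=e_2+y_1$, $y_1=Pu_1$,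 $y_2=Cu_2$; well-posed if $(u_1,u_2)\mapsto(u_1+Cu_2,\ u_2-Pu_1)$ has a causal inverse on $\mathcal{L}_{2e+}\times\mathcal{L}_{2e+}$. $P\#C|_{e_2=0}$ is the loop with $e_2=0$; it is stable if there is $c>0$ with $\|\Gamma_T(u_1,u_2)\|_2\le c\|\Gamma_Te\|_2$ for all $T\ge0$ and all $e=(e_1,0)$, $e_1\in\mathcal{L}_{2e+}$. *)

(* Defs.v *)
From HB Require Import structures.
From mathcomp Require Import all_boot all_order all_algebra.
From mathcomp Require Import all_classical all_reals all_analysis.
Set Implicit Arguments. Unset Strict Implicit. Unset Printing Implicit Defensive.
Import Order.TTheory GRing.Theory Num.Theory.
Import numFieldNormedType.Exports.
Local Open Scope classical_set_scope.
Local Open Scope ring_scope.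

Section Signals.
Variables (R : realType) (n : nat).

Definition signal := R -> 'rV[R]_n.

Local Notation mu := (@lebesgue_measure R).

Definition vsq (x : 'rV[R]_n) : R := \sum_(i < n) x ord0 i ^+ 2.
Definition vdot (x y : 'rV[R]_n) : R := \sum_(i < n) x ord0 i * y ord0 i.

(* a.e. equality of signals: equality in L2 / L2e (elements are classes) *)
Definition aeeq (u v : signal) : Prop := {ae mu, forall t, u t = v t}.

Definition L2 (u : signal) : Prop :=
  (forall i : 'I_n, measurable_fun setT (fun t => u t ord0 i)) /\
  mu.-integrable setT (fun t => (vsq (u t))%:E).

Definition l2norm (u : signal) : R := Num.sqrt (Rintegral mu setT (fun t => vsq (u t))).
Definition l2inner (u v : signal) : R := Rintegral mu setT (fun t => vdot (u t) (v t)).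

Definition L2p (u : signal) : Prop :=
  L2 u /\ {ae mu, forall t, t < 0 -> u t = 0}.

Definition trunc (T : R) (u : signal) : signal :=
  fun t => if t <= T then u t else 0.

Definition L2ep (u : signal) : Prop := forall T, 0 <= T -> L2p (trunc T u).

(* operators act on L2e+, whose elements are a.e.-classes: they must be
   compatible with a.e. equality *)
Definition respects_ae (P : signal -> signal) : Prop :=
  forall u v, L2ep u -> L2ep v -> aeeq u v -> aeeq (P u) (P v).

Definition is_system (P : signal -> signal) : Prop :=
  [/\ respects_ae P,
      (forall u, L2ep u -> L2ep (P u)),
      aeeq (P (fun _ => 0)) (fun _ => 0) &
      exists u, L2ep u /\ ~ aeeq (P u) (fun _ => 0)].

Definition causal (P : signal -> signal) : Prop :=
  forall T u, 0 <= T -> L2ep u -> aeeq (trunc T (P u)) (trunc T (P (trunc T u))).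

Definition stable (P : signal -> signal) : Prop :=
  (forall u, L2p u -> L2p (P u)) /\
  exists c : R, forall u, L2p u -> l2norm u != 0 -> l2norm (P u) / l2norm u <= c.

Definition cos_theta_e (P : signal -> signal) : R :=
  inf [set r | exists u T, [/\ L2ep u, 0 < T, l2norm (trunc T u) != 0,
                               l2norm (trunc T (P u)) != 0 &
       r = l2inner (trunc T u) (trunc T (P u)) /
           (l2norm (trunc T u) * l2norm (trunc T (P u)))]].
Definition theta_e (P : signal -> signal) : R := acos (cos_theta_e P).

Definition psignal := (signal * signal)%type.
Definition paeeq (x y : psignal) : Prop := aeeq x.1 y.1 /\ aeeq x.2 y.2.
Definition pL2ep (x : psignal) : Prop := L2ep x.1 /\ L2ep x.2.
Definition ptrunc (T : R) (x : psignal) : psignal := (trunc T x.1, trunc T x.2).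

Definition fb_map (P C : signal -> signal) (x : psignal) : psignal :=
  (fun t => x.1 t + C x.2 t, fun t => x.2 t - P x.1 t).

Definition well_posed (P C : signal -> signal) : Prop :=
  exists F : psignal -> psignal,
    [/\ (forall x, pL2ep x -> pL2ep (F x)),
        (forall x y, pL2ep x -> pL2ep y -> paeeq x y -> paeeq (F x) (F y)),
        (forall x, pL2ep x -> paeeq (F (fb_map P C x)) x),
        (forall x, pL2ep x -> paeeq (fb_map P C (F x)) x) &
        (forall T x, 0 <= T -> pL2ep x -> paeeq (ptrunc T (F x)) (ptrunc T (F (ptrunc T x))))].

(* stability of P#C restricted to e2 = 0: for every e1 in L2e+ and the
   resulting loop signals u1 = e1 - C u2, u2 = P u1 (e2 = 0),
   ||Gamma_T (u1,u2)|| <= c ||Gamma_T (e1,0)|| for all T >= 0 *)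
Definition loop_e2_0_stable (P C : signal -> signal) : Prop :=
  exists2 c : R, 0 < c &
    forall e1 u1 u2 T, L2ep e1 -> L2ep u1 -> L2ep u2 -> 0 <= T ->
      aeeq u1 (fun t => e1 t - C u2 t) -> aeeq u2 (P u1) ->
      Num.sqrt (l2norm (trunc T u1) ^+ 2 + l2norm (trunc T u2) ^+ 2)
        <= c * l2norm (trunc T e1).

End Signals.

(* Main.v *)
Require Import Defs.
From HB Require Import structures.
From mathcomp Require Import all_boot all_order all_algebra.
From mathcomp Require Import all_classical all_reals all_analysis.
From mathcomp Require Import ring lra.
Import Order.TTheory GRing.Theory Num.Theory.
Import numFieldNormedType.Exports.
Local Open Scope classical_set_scope.
Local Open Scope ring_scope.

Section A. Variable R : realFieldType.
Lemma A1 (p q Na Ne : R) : p <= 1 -> q <= 1 -> 0 <= Na -> Na <= Ne ->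
  (p + q) * Na <= 2 * Ne.
Proof. move=> h1 h2 h3 h4.
have : (p + q) * Na <= 2 * Na by rewrite ler_wpM2r //; lra.
lra. Qed.
Lemma A2 (p q Na Nc Ne : R) : -1 <= q -> q <= 1 -> 0 <= Ne ->
  p * Na + q * Nc <= Ne -> Na <= Ne + Nc -> Nc <= Ne + Na -> (p + q) * Na <= 2 * Ne.
Proof.
move=> q1 q2 Ne0 h1 t1 t2.
have [q0|q0] := lerP 0 q.
  have h3 : q * (Na - Ne) <= q * Nc by rewrite ler_wpM2l // lerBlDr addrC.
  have h6 : q * Ne <= Ne by rewrite ler_piMl.
  rewrite mulrBr in h3; rewrite mulrDl; lra.
have h3 : q * (Ne + Na) <= q * Nc by rewrite ler_wnM2l // ltW.
have h7 : - q * Ne <= Ne by rewrite ler_piMl // lerNl.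
rewrite mulrDr in h3; rewrite mulNr in h7; rewrite mulrDl; lra.
Qed.
Lemma A3 (p q Na Nb Nc Ne x y z : R) : 0 < Nb -> p * (Na * Nb) <= x ->
  q * (Nb * Nc) <= y -> x = z - y -> z <= Ne * Nb -> p * Na + q * Nc <= Ne.
Proof.
move=> Nbp h1 h2 e h3; rewrite -(ler_pM2r Nbp) mulrDl -!mulrA [Nc * Nb]mulrC.
lra.
Qed.
Lemma A5 (Na Nb Ne k K : R) : Nb <= k * Na -> 0 <= k -> Na <= K * Ne -> 0 <= Ne ->
  Na + Nb <= ((1 + k) * K + 1) * Ne.
Proof.
move=> h1 k0 h2 Ne0.
have h4 : (1 + k) * Na <= (1 + k) * (K * Ne) by rewrite ler_wpM2l // addr_ge0.
have h5 : (1 + k) * (K * Ne) + Ne = ((1 + k) * K + 1) * Ne by ring.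
rewrite -h5; rewrite mulrDl mul1r in h4; lra.
Qed.
End A.
Arguments A1 {R p q Na Ne}.
Arguments A2 {R p q Na Nc Ne}.
Arguments A3 {R p q Na Nb Nc Ne x y z}.
Arguments A5 {R Na Nb Ne k K}.
Lemma A4 (R : rcfType) (a b : R) : 0 <= a -> 0 <= b -> Num.sqrt (a ^+ 2 + b ^+ 2) <= a + b.
Proof.
move=> a0 b0; rewrite -(ger0_norm (addr_ge0 a0 b0)) -sqrtr_sqr ler_sqrt ?sqr_ge0 //.
rewrite sqrrD -addrA [_ *+ 2 + _]addrC addrA lerDl.
by rewrite mulrn_wge0 // mulr_ge0.
Qed.
Arguments A4 {R a b}.

Section Helpers.
Context {R : realType} {n : nat}.
Local Notation mu := (@lebesgue_measure R).
Implicit Types u v w : signal R n.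

Lemma vsq_ge0 (x : 'rV[R]_n) : 0 <= vsq x.
Proof. by apply: sumr_ge0 => i _; exact: sqr_ge0. Qed.

Lemma vdot_sym (x y : 'rV[R]_n) : vdot x y = vdot y x.
Proof. by apply: eq_bigr => i _; rewrite mulrC. Qed.

Lemma vdot_xx (x : 'rV[R]_n) : vdot x x = vsq x.
Proof. by apply: eq_bigr => i _; rewrite expr2. Qed.

Lemma vdot_abs (x y : 'rV[R]_n) : `|vdot x y| <= vsq x + vsq y.
Proof.
rewrite /vdot /vsq -big_split /=; apply: le_trans (ler_norm_sum _ _ _) _.
apply: ler_sum => i _; rewrite normrM.
have h1 := sqr_ge0 (`|x ord0 i| - `|y ord0 i|).
rewrite -(real_normK (num_real (x ord0 i))) -(real_normK (num_real (y ord0 i))).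
nra.
Qed.

Lemma aux_le (s l a b : R) : s ^+ 2 = 1 -> 0 < l ->
  s * (a * b) *+ 2 <= l * a ^+ 2 + b ^+ 2 / l.
Proof.
move=> s2 l0.
have key : l * a ^+ 2 + b ^+ 2 / l = 2 * (s * (a * b)) + (l * a - s * b) ^+ 2 / l.
  have e : (s * b) ^+ 2 = b ^+ 2 by rewrite exprMn s2 mul1r.
  rewrite sqrrB e; field; by rewrite gt_eqF.
rewrite key -mulr_natl lerDl divr_ge0 ?sqr_ge0 //; exact: ltW.
Qed.

Lemma vdot_le (s l : R) (x y : 'rV[R]_n) : s ^+ 2 = 1 -> 0 < l ->
  s * vdot x y *+ 2 <= l * vsq x + vsq y / l.
Proof.
move=> s2 l0; rewrite /vdot /vsq mulr_sumr mulr_sumr mulr_suml -sumrMnl -big_split /=.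
by apply: ler_sum => i _; exact: aux_le.
Qed.

Definition mcoord u := forall i : 'I_n, measurable_fun setT (fun t => u t ord0 i).

Lemma L2_mc u : L2 u -> mcoord u.
Proof. by case. Qed.
Arguments L2_mc {u}.

Lemma mvdot u v : mcoord u -> mcoord v ->
  measurable_fun setT (fun t => vdot (u t) (v t)).
Proof.
move=> mu' mv; apply: measurable_sum => i; exact: measurable_realfun.measurable_funM.
Qed.

Lemma mvsq u : mcoord u -> measurable_fun setT (fun t => vsq (u t)).
Proof.
move=> mu'; rewrite (_ : (fun t => _) = (fun t => vdot (u t) (u t))).
  exact: mvdot.
by apply/funext => t; rewrite vdot_xx.
Qed.

Lemma ivdot u v : L2 u -> L2 v ->
  mu.-integrable setT (EFin \o (fun t => vdot (u t) (v t))).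
Proof.
move=> [mu' iu] [mv iv].
apply: (@le_integrable _ _ _ mu setT measurableT _ (EFin \o (fun t => vsq (u t) + vsq (v t)))) => //.
- by apply/measurable_realfun.measurable_EFinP; exact: mvdot.
- move=> t _ /=; rewrite lee_fin (ger0_norm (addr_ge0 (vsq_ge0 _) (vsq_ge0 _))); exact: vdot_abs.
- rewrite (_ : _ \o _ = (fun t => (vsq (u t))%:E) \+ (fun t => (vsq (v t))%:E)).
    exact: integrableD.
  by apply/funext => t.
Qed.


Lemma iZ (f : R -> R) (k : R) : mu.-integrable setT (EFin \o f) ->
  mu.-integrable setT (EFin \o (fun t => k * f t)).
Proof.
move=> h; rewrite (_ : _ \o _ = (fun t => (k%:E * (EFin \o f) t)%E)).
  exact: integrableZl.
by apply/funext => t.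
Qed.

Lemma iD (f g : R -> R) : mu.-integrable setT (EFin \o f) ->
  mu.-integrable setT (EFin \o g) ->
  mu.-integrable setT (EFin \o (fun t => f t + g t)).
Proof.
move=> h1 h2; rewrite (_ : _ \o _ = ((EFin \o f) \+ (EFin \o g))%E).
  exact: integrableD.
by apply/funext => t.
Qed.

Lemma iB (f g : R -> R) : mu.-integrable setT (EFin \o f) ->
  mu.-integrable setT (EFin \o g) ->
  mu.-integrable setT (EFin \o (fun t => f t - g t)).
Proof.
move=> h1 h2; rewrite (_ : _ \o _ = ((EFin \o f) \- (EFin \o g))%E).
  exact: integrableB.
by apply/funext => t.
Qed.

Lemma ivsq u : L2 u -> mu.-integrable setT (EFin \o (fun t => vsq (u t))).
Proof. by case. Qed.

Lemma l2norm_ge0 u : 0 <= l2norm u.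
Proof. exact: sqrtr_ge0. Qed.

Lemma Ivsq_ge0 u : 0 <= \int[mu]_(t in setT) vsq (u t).
Proof. by apply: Rintegral_ge0 => t _; exact: vsq_ge0. Qed.

Lemma l2norm_sq u : l2norm u ^+ 2 = \int[mu]_(t in setT) vsq (u t).
Proof. by rewrite /l2norm sqr_sqrtr // Ivsq_ge0. Qed.

Lemma cs_aux (x a b : R) : 0 <= a -> 0 <= b ->
  (forall l, 0 < l -> x *+ 2 <= l * a + b / l) ->
  x <= Num.sqrt a * Num.sqrt b.
Proof.
move=> a0 b0 h.
have [sa0|sa0] := eqVneq (Num.sqrt a) 0.
  have a00 : a = 0 by rewrite -[a]sqr_sqrtr // sa0 expr0n.
  rewrite sa0 mul0r; apply/negPn/negP; rewrite -ltNge => x0.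
  have l0 : 0 < (b + 1) / x by rewrite divr_gt0 // ltr_pwDr.
  have := h _ l0; rewrite a00 mulr0 add0r invf_div mulrA.
  have -> : b * x / (b + 1) = x * (b / (b + 1)) by rewrite mulrAC mulrC.
  move=> hh.
  have : b / (b + 1) <= 1 by rewrite ler_pdivrMr ?mul1r ?lerDl // ltr_pwDr.
  move=> hb; have : x * (b / (b + 1)) <= x by rewrite ler_piMr // ?ltW // divr_ge0 // addr_ge0.
  rewrite mulr2n in hh; lra.
have [sb0|sb0] := eqVneq (Num.sqrt b) 0.
  have b00 : b = 0 by rewrite -[b]sqr_sqrtr // sb0 expr0n.
  rewrite sb0 mulr0; apply/negPn/negP; rewrite -ltNge => x0.
  have l0 : 0 < x / (a + 1) by rewrite divr_gt0 // ltr_pwDr.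
  have := h _ l0; rewrite b00 mul0r addr0.
  have -> : x / (a + 1) * a = x * (a / (a + 1)) by rewrite mulrAC -mulrA.
  move=> hh.
  have : a / (a + 1) <= 1 by rewrite ler_pdivrMr ?mul1r ?lerDl // ltr_pwDr.
  move=> hb; have : x * (a / (a + 1)) <= x by rewrite ler_piMr // ?ltW // divr_ge0 // addr_ge0.
  rewrite mulr2n in hh; lra.
have sa : 0 < Num.sqrt a by rewrite lt_neqAle eq_sym sa0 sqrtr_ge0.
have sb : 0 < Num.sqrt b by rewrite lt_neqAle eq_sym sb0 sqrtr_ge0.
have l0 : 0 < Num.sqrt b / Num.sqrt a by rewrite divr_gt0.
have := h _ l0.
rewrite -{2}[a]sqr_sqrtr // -{2}[b]sqr_sqrtr // invf_div.
have -> : Num.sqrt b / Num.sqrt a * Num.sqrt a ^+ 2 = Num.sqrt a * Num.sqrt b.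
  by field; rewrite gt_eqF.
have -> : Num.sqrt b ^+ 2 * (Num.sqrt a / Num.sqrt b) = Num.sqrt a * Num.sqrt b.
  by field; rewrite gt_eqF.
rewrite mulr2n; lra.
Qed.

Lemma cs u v (s : R) : L2 u -> L2 v -> s ^+ 2 = 1 ->
  s * l2inner u v <= l2norm u * l2norm v.
Proof.
move=> Lu Lv s2; rewrite /l2norm; apply: cs_aux; rewrite ?Ivsq_ge0 // => l l0.
have i1 := ivdot _ _ Lu Lv; have iu := ivsq _ Lu; have iv := ivsq _ Lv.
have E1 : s * l2inner u v *+ 2 =
    \int[mu]_(t in setT) (2 * (s * vdot (u t) (v t))).
  rewrite /l2inner RintegralZl //; last exact: iZ.
  by rewrite RintegralZl // mulr_natl.
have E2 : l * \int[mu]_(t in setT) vsq (u t) + \int[mu]_(t in setT) vsq (v t) / l =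
    \int[mu]_(t in setT) (l * vsq (u t) + l^-1 * vsq (v t)).
  rewrite RintegralD //; try exact: iZ.
  by rewrite !RintegralZl // [l^-1 * _]mulrC.
rewrite E1 E2; apply: le_Rintegral => //.
- by do 2 apply: iZ.
- by apply: iD; exact: iZ.
- by move=> t _; rewrite mulr_natl [l^-1 * _]mulrC; exact: vdot_le.
Qed.

Lemma aeS2 (P Q S : R -> Prop) : (forall t, P t -> Q t -> S t) ->
  {ae mu, forall t, P t} -> {ae mu, forall t, Q t} -> {ae mu, forall t, S t}.
Proof. by move=> h; apply: filterS2 => //; exact: (ae_filter_ringOfSetsType mu). Qed.

Lemma aeS (P S : R -> Prop) : (forall t, P t -> S t) ->
  {ae mu, forall t, P t} -> {ae mu, forall t, S t}.
Proof. by move=> h; apply: filterS => //; exact: (ae_filter_ringOfSetsType mu). Qed.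

Lemma aeT (P : R -> Prop) : (forall t, P t) -> {ae mu, forall t, P t}.
Proof. by move=> h; apply: nearW => //; exact: (ae_filter_ringOfSetsType mu). Qed.

Lemma aeeq_refl u : aeeq u u.
Proof. exact: (@aeT (fun t => u t = u t) (fun t => erefl)). Qed.

Lemma Rint_ae (f g : R -> R) : measurable_fun setT f -> measurable_fun setT g ->
  {ae mu, forall t, f t = g t} ->
  \int[mu]_(t in setT) f t = \int[mu]_(t in setT) g t.
Proof.
move=> mf mg h; rewrite /Rintegral; congr fine.
apply: ae_eq_integral => //; try exact/measurable_realfun.measurable_EFinP.
all: try by apply: aeS h => t /= -> _.
Qed.

Lemma l2normE u : l2norm u = Num.sqrt (l2inner u u).
Proof.
rewrite /l2norm /l2inner; congr Num.sqrt; apply: eq_Rintegral => t _;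
  by rewrite vdot_xx.
Qed.

Lemma inner_ae f f' g g' : mcoord f -> mcoord f' -> mcoord g -> mcoord g' ->
  aeeq f f' -> aeeq g g' -> l2inner f g = l2inner f' g'.
Proof.
move=> mf mf' mg mg' h1 h2; apply: Rint_ae; try exact: mvdot.
by apply: aeS2 h1 h2 => t -> ->.
Qed.

Lemma norm_ae f f' : mcoord f -> mcoord f' -> aeeq f f' -> l2norm f = l2norm f'.
Proof. by move=> mf mf' h; rewrite !l2normE (@inner_ae f f' f f'). Qed.

Definition sub_s (g h : signal R n) : signal R n := fun t => g t - h t.

Lemma mcoordB g h : mcoord g -> mcoord h -> mcoord (sub_s g h).
Proof.
move=> mg mh i; rewrite /sub_s.
rewrite (_ : (fun t => _) = (fun t => g t ord0 i - h t ord0 i)).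
  exact: measurable_realfun.measurable_funB.
by apply/funext => t; rewrite !mxE.
Qed.
Arguments mcoordB {g h}.

Lemma vdotBl (x y z : 'rV[R]_n) : vdot (x - y) z = vdot x z - vdot y z.
Proof.
by rewrite /vdot -sumrB; apply: eq_bigr => i _; rewrite !mxE mulrBl.
Qed.

Lemma vsqB (x y : 'rV[R]_n) : vsq (x - y) = vsq x - vdot x y *+ 2 + vsq y.
Proof.
rewrite -!vdot_xx /vdot -sumrMnl -sumrB -big_split /=.
by apply: eq_bigr => i _; rewrite !mxE; ring.
Qed.

Lemma inner_lin f g h k : mcoord f -> L2 g -> L2 h -> L2 k ->
  aeeq f (sub_s g h) -> l2inner f k = l2inner g k - l2inner h k.
Proof.
move=> mf Lg Lh Lk e.
rewrite (@inner_ae f (sub_s g h) k k mf (mcoordB (L2_mc Lg) (L2_mc Lh))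
  (L2_mc Lk) (L2_mc Lk) e (aeeq_refl k)).
rewrite /l2inner -RintegralB //; try exact: ivdot.
by apply: eq_Rintegral => t _; rewrite /sub_s vdotBl.
Qed.

Lemma norm_tri f g h : mcoord f -> L2 g -> L2 h ->
  aeeq f (sub_s g h) -> l2norm f <= l2norm g + l2norm h.
Proof.
move=> mf Lg Lh e.
rewrite (@norm_ae f (sub_s g h) mf (mcoordB (L2_mc Lg) (L2_mc Lh)) e).
rewrite /l2norm -(ger0_norm (addr_ge0 (l2norm_ge0 g) (l2norm_ge0 h))).
rewrite -sqrtr_sqr ler_sqrt ?sqr_ge0 //.
have ig := ivsq _ Lg; have ih := ivsq _ Lh; have igh := ivdot _ _ Lg Lh.
have E : \int[mu]_(t in setT) vsq (sub_s g h t) =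
    l2norm g ^+ 2 - 2 * l2inner g h + l2norm h ^+ 2.
  transitivity (\int[mu]_(t in setT) ((vsq (g t) - 2 * vdot (g t) (h t)) + vsq (h t))).
    by apply: eq_Rintegral => t _; rewrite /sub_s vsqB mulr_natl.
  rewrite RintegralD //; last by apply: iB => //; exact: iZ.
  rewrite RintegralB //; last exact: iZ.
  by rewrite RintegralZl // !l2norm_sq.
rewrite E.
have N1 : (-1 : R) ^+ 2 = 1 by rewrite sqrrN expr1n.
have := @cs g h (-1) Lg Lh N1.
rewrite sqrrD => hc; nra.
Qed.


Lemma ae_neq0 : {ae mu, forall t : R, t != 0}.
Proof.
exists [set 0]; split => //; first exact: lebesgue_measure_set1.
by move=> t /= /negP; rewrite negbK => /eqP ->.
Qed.

Lemma vsq_eq0 (x : 'rV[R]_n) : vsq x = 0 -> x = 0.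
Proof.
move=> /eqP; rewrite psumr_eq0; last by move=> i _; exact: sqr_ge0.
move=> /allP h; apply/rowP => i; rewrite !mxE.
have := h i (mem_index_enum _); rewrite /= sqrf_eq0 => /eqP e.
by rewrite -e; congr (x _ i); apply/val_inj.
Qed.

Lemma trunc_ae T u v : aeeq u v -> aeeq (trunc T u) (trunc T v).
Proof. by apply: aeS => t; rewrite /trunc => ->. Qed.

Lemma trunc_sub T g h : trunc T (sub_s g h) = sub_s (trunc T g) (trunc T h).
Proof. by apply/funext => t; rewrite /trunc /sub_s; case: ifP; rewrite ?subr0. Qed.

Lemma L2ep_L2 u T : L2ep u -> 0 <= T -> L2 (trunc T u).
Proof. by move=> h T0; case: (h T T0). Qed.


Lemma truncK T T' u : trunc T' (trunc T u) = trunc (Order.min T T') u.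
Proof.
apply/funext => t; rewrite /trunc le_min.
by case: (t <= T'); case: (t <= T); rewrite ?andbF.
Qed.

Lemma L2ep_trunc u T : L2ep u -> 0 <= T -> L2ep (trunc T u).
Proof.
move=> h T0 T' T'0; rewrite truncK; apply: h.
by rewrite le_min T0 T'0.
Qed.

Lemma L2p0 : L2p (fun _ : R => (0 : 'rV[R]_n)).
Proof.
have v0 : vsq (0 : 'rV[R]_n) = 0 by rewrite /vsq big1 // => i _; rewrite mxE expr0n.
split; last exact: aeT.
split.
  move=> i; rewrite (_ : (fun t => _) = cst 0); first exact: measurable_cst.
  by apply/funext => t; rewrite mxE.
rewrite (_ : (fun t => _) = cst 0%E); first exact: integrable0.
by apply/funext => t; rewrite v0.
Qed.

Lemma L2ep0 : L2ep (fun _ : R => (0 : 'rV[R]_n)).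
Proof.
move=> T T0; rewrite (_ : trunc T _ = fun _ => 0); first exact: L2p0.
by apply/funext => t; rewrite /trunc; case: ifP.
Qed.

Lemma l2norm0 : l2norm (fun _ : R => (0 : 'rV[R]_n)) = 0.
Proof.
have v0 : vsq (0 : 'rV[R]_n) = 0 by rewrite /vsq big1 // => i _; rewrite mxE expr0n.
rewrite /l2norm v0 Rintegral_cst // mul0r; exact: sqrtr0.
Qed.

Lemma norm0_ae u : L2 u -> l2norm u = 0 -> aeeq u (fun _ => 0).
Proof.
move=> [mu' iu] /eqP; rewrite sqrtr_eq0 => h0.
have h : \int[mu]_(t in setT) vsq (u t) = 0.
  by apply/eqP; rewrite eq_le h0 Ivsq_ge0.
have hi : (\int[mu]_(t in setT) `|(vsq (u t))%:E|)%E = 0%E.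
  under eq_integral do rewrite gee0_abs ?lee_fin ?vsq_ge0 //.
  have fin : (\int[mu]_(x in setT) (vsq (u x))%:E)%E \is a fin_num.
    exact: integrable_fin_num.
  rewrite -(fineK fin); move: h; rewrite /Rintegral => -> //.
have hae : ae_eq mu setT (EFin \o (fun t => vsq (u t))) (cst 0%E).
  apply: (iffLR (ae_eq_integral_abs mu measurableT _)).
  all: try exact: hi.
  apply/measurable_realfun.measurable_EFinP; exact: mvsq.
apply: aeS hae => t /(_ I) [] /vsq_eq0 -> //.
Qed.

Lemma trunc_le T u : L2 u -> L2 (trunc T u) -> l2norm (trunc T u) <= l2norm u.
Proof.
move=> Lu Lt; rewrite /l2norm ler_sqrt ?Ivsq_ge0 //.
apply: le_Rintegral => //; try exact: ivsq.
move=> t _; rewrite /trunc; case: ifP => // _.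
by rewrite (_ : vsq 0 = 0) ?vsq_ge0 // /vsq big1 // => i _; rewrite mxE expr0n.
Qed.

Lemma trunc0 u : L2ep u -> l2norm (trunc 0 u) = 0.
Proof.
move=> h; have [L ae0] := h 0 (lexx _).
rewrite (@norm_ae (trunc 0 u) (fun _ => 0) (L2_mc L) (L2_mc (proj1 L2p0))) ?l2norm0 //.
apply: aeS2 ae0 ae_neq0 => t h1 h2.
have [tn|] := ltP t 0; first exact: h1.
rewrite le_eqVlt eq_sym (negbTE h2) /= => tp.
by rewrite /trunc leNgt tp.
Qed.


Arguments L2ep_L2 {u T}.
Arguments L2ep_trunc {u T}.
Arguments norm0_ae {u}.
Arguments trunc_ae {T u v}.

Lemma aeeq_trans u v w : aeeq u v -> aeeq v w -> aeeq u w.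
Proof. by apply: aeS2 => t -> ->. Qed.

Lemma aeeq_sym u v : aeeq u v -> aeeq v u.
Proof. by apply: aeS => t ->. Qed.

Lemma sys0 (P : signal R n -> signal R n) u T : is_system P -> causal P ->
  L2ep u -> 0 <= T -> l2norm (trunc T u) = 0 -> l2norm (trunc T (P u)) = 0.
Proof.
move=> [resp PL P0 _] cP Lu T0 h.
have Lt := L2ep_L2 Lu T0.
have a0 := norm0_ae Lt h.
have a1 := resp _ _ (L2ep_trunc Lu T0) L2ep0 a0.
have a2 : aeeq (trunc T (P u)) (fun _ => 0).
  apply: aeeq_trans (cP T u T0 Lu) _.
  have -> : (fun _ : R => (0 : 'rV[R]_n)) = trunc T (fun _ => 0).
    by apply/funext => t; rewrite /trunc; case: ifP.
  apply: trunc_ae; exact: aeeq_trans a1 P0.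
have LP := L2ep_L2 (PL u Lu) T0.
by rewrite (@norm_ae _ (fun _ => 0) (L2_mc LP) (L2_mc (proj1 L2p0)) a2) l2norm0.
Qed.

Definition angset (P : signal R n -> signal R n) : set R :=
  [set r | exists u T, [/\ L2ep u, 0 < T, l2norm (trunc T u) != 0,
                               l2norm (trunc T (P u)) != 0 &
       r = l2inner (trunc T u) (trunc T (P u)) /
           (l2norm (trunc T u) * l2norm (trunc T (P u)))]].

Lemma cosE (P : signal R n -> signal R n) : cos_theta_e P = inf (angset P).
Proof. by []. Qed.

Lemma angset_bnd (P : signal R n -> signal R n) r : is_system P -> angset P r -> -1 <= r <= 1.
Proof.
move=> [_ PL _ _] [u [T [Lu T0 n1 n2 ->]]].
have T0' : 0 <= T by exact: ltW.
have L1 := L2ep_L2 Lu T0'; have L2' := L2ep_L2 (PL u Lu) T0'.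
have N1 : (-1 : R) ^+ 2 = 1 by rewrite sqrrN expr1n.
have c1 := @cs _ _ 1 L1 L2' (expr1n _ _).
have c2 := @cs _ _ (-1) L1 L2' N1.
have pos : 0 < l2norm (trunc T u) * l2norm (trunc T (P u)).
  by rewrite mulr_gt0 // lt_neqAle eq_sym ?n1 ?n2 l2norm_ge0.
rewrite ler_pdivlMr // ler_pdivrMr // mul1r mulN1r.
rewrite mul1r in c1; rewrite mulN1r in c2.
by rewrite c1 andbT lerNl.
Qed.

Arguments angset_bnd {P r}.

Lemma has_lb_ang (P : signal R n -> signal R n) : is_system P -> has_lbound (angset P).
Proof. by move=> sP; exists (-1) => r /(angset_bnd sP) /andP[]. Qed.

Arguments has_lb_ang {P}.

Lemma cos_range (P : signal R n -> signal R n) : is_system P -> -1 <= cos_theta_e P <= 1.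
Proof.
move=> sP; rewrite cosE.
have [[r Sr]|S0] := pselect (exists r, angset P r); last first.
  rewrite (_ : angset P = set0) ?inf0; last first.
    by apply/seteqP; split => r // Sr; exfalso; apply: S0; exists r.
  by rewrite lerN10 ler01.
apply/andP; split.
  apply: lb_le_inf; first by exists r.
  by move=> x /(angset_bnd sP) /andP[].
apply: le_trans (ge_inf (has_lb_ang sP) Sr) _.
by have /andP[] := angset_bnd sP Sr.
Qed.

Lemma ang (P : signal R n -> signal R n) u T : is_system P ->
  L2ep u -> 0 <= T ->
  cos_theta_e P * (l2norm (trunc T u) * l2norm (trunc T (P u)))
    <= l2inner (trunc T u) (trunc T (P u)).
Proof.
move=> sP Lu T0; have sP' := sP; case: sP' => [_ PL _ _].
have L1 := L2ep_L2 Lu T0; have L2' := L2ep_L2 (PL u Lu) T0.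
have N1 : (-1 : R) ^+ 2 = 1 by rewrite sqrrN expr1n.
have c2 := @cs _ _ (-1) L1 L2' N1; rewrite mulN1r in c2.
have [z|nz] := eqVneq (l2norm (trunc T u) * l2norm (trunc T (P u))) 0.
  by rewrite z mulr0 -oppr_le0 (le_trans c2) // z.
have [n1 n2] : l2norm (trunc T u) != 0 /\ l2norm (trunc T (P u)) != 0.
  by split; apply: contra nz => /eqP ->; rewrite ?mul0r ?mulr0.
have Tp : 0 < T.
  rewrite lt_neqAle T0 andbT; apply/negP => /eqP T00.
  by move: n1; rewrite -T00 trunc0 ?eqxx.
have Sr : angset P (l2inner (trunc T u) (trunc T (P u)) /
           (l2norm (trunc T u) * l2norm (trunc T (P u)))).
  by exists u, T; split.
have := ge_inf (has_lb_ang sP) Sr; rewrite -cosE.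
have pos : 0 < l2norm (trunc T u) * l2norm (trunc T (P u)).
  by rewrite lt_neqAle eq_sym nz mulr_ge0 // l2norm_ge0.
by rewrite ler_pdivlMr.
Qed.

Lemma acos_sum (p q : R) : -1 <= p <= 1 -> -1 <= q <= 1 ->
  acos p + acos q < pi -> 0 < p + q.
Proof.
move=> hp hq h.
have hq' : -1 <= - q <= 1.
  by case/andP: hq => a b; rewrite lerNr opprK b /= lerNl.
have e : acos p < acos (- q) by rewrite acosN // ltrBrDr.
have i1 : acos p \in `[0, pi] by rewrite in_itv /= acos_ge0 // acos_lepi.
have i2 : acos (- q) \in `[0, pi] by rewrite in_itv /= acos_ge0 // acos_lepi.
rewrite -(ltr_cos i1 i2) in e.
rewrite !acosK ?in_itv //= in e.
by rewrite -ltrBlDr sub0r.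
Qed.


Lemma l2inner_sym u v : l2inner u v = l2inner v u.
Proof. by apply: eq_Rintegral => t _; rewrite vdot_sym. Qed.

End Helpers.
Arguments cos_range {R n P}.
Arguments ang {R n P u T}.
Arguments sys0 {R n P u T}.
Arguments norm_tri {R n f g h}.
Arguments inner_lin {R n f g h k}.
Arguments inner_ae {R n f f' g g'}.
Arguments norm_ae {R n f f'}.
Arguments cs {R n u v}.
Arguments trunc_le {R n T u}.
Arguments L2ep_L2 {R n u T}.
Arguments L2ep_trunc {R n u T}.
Arguments trunc_ae {R n T u v}.
Arguments L2_mc {R n u}.

Theorem corollary5 (R : realType) (n : nat) (P C : signal R n -> signal R n) :
  is_system P -> causal P -> stable P ->
  is_system C -> causal C -> stable C ->
  well_posed P C ->
  theta_e P + theta_e C < pi ->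
  loop_e2_0_stable P C.
Proof.
move=> sP cP stP sC cC stC _ hth.
have hp := cos_range sP; have hq := cos_range sC.
have hpq : 0 < cos_theta_e P + cos_theta_e C by apply: acos_sum.
move: hp hq hpq.
set p := cos_theta_e P; set q := cos_theta_e C => hp hq hpq.
case: stP => hsP [cp hcp].
pose k := Num.max cp 0.
have k0 : 0 <= k by rewrite le_max lexx orbT.
have cpk : cp <= k by rewrite le_max lexx.
pose K := 2 / (p + q).
have K0 : 0 < K by rewrite divr_gt0.
exists ((1 + k) * K + 1).
  by rewrite ltr_pwDr // mulr_ge0 // ?addr_ge0 // ltW.
move=> e1 u1 u2 T Le1 Lu1 Lu2 T0 eq1 eq2.
have sP' := sP; have sC' := sC.
case: sP' => respP PLP P0P _; case: sC' => respC PLC P0C _.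
have La := L2ep_L2 Lu1 T0; have Lb := L2ep_L2 Lu2 T0.
have Lc := L2ep_L2 (PLC u2 Lu2) T0; have Le := L2ep_L2 Le1 T0.
have Lb' := L2ep_L2 (PLP u1 Lu1) T0.
have aeq : aeeq (trunc T u1) (sub_s (trunc T e1) (trunc T (C u2))).
  by rewrite -trunc_sub; exact: trunc_ae eq1.
have ceq : aeeq (trunc T (C u2)) (sub_s (trunc T e1) (trunc T u1)).
  by apply: aeS aeq => t; rewrite /sub_s => ->; rewrite opprB addrC subrK.
have bb' : aeeq (trunc T u2) (trunc T (P u1)) := trunc_ae eq2.
have tri1 := norm_tri (L2_mc La) Le Lc aeq.
have tri2 := norm_tri (L2_mc Lc) Le La ceq.
have Nbb' : l2norm (trunc T u2) = l2norm (trunc T (P u1)).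
  exact: norm_ae (L2_mc Lb) (L2_mc Lb') bb'.
have angP := ang sP Lu1 T0.
rewrite -Nbb' -(inner_ae (L2_mc La) (L2_mc La) (L2_mc Lb) (L2_mc Lb')
  (aeeq_refl _) bb') in angP.
have angC := ang sC Lu2 T0.
have lin := inner_lin (L2_mc La) Le Lc Lb aeq.
rewrite (l2inner_sym (trunc T (C u2))) in lin.
have cse := cs 1 Le Lb (expr1n _ _); rewrite mul1r in cse.
move: tri1 tri2 angP angC lin cse Nbb'.
set Na := l2norm (trunc T u1); set Nb := l2norm (trunc T u2).
set Nc := l2norm (trunc T (C u2)); set Ne := l2norm (trunc T e1).
move=> tri1 tri2 angP angC lin cse Nbb'.
have Na0 : 0 <= Na := l2norm_ge0 _; have Nb0 : 0 <= Nb := l2norm_ge0 _.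
have Nc0 : 0 <= Nc := l2norm_ge0 _; have Ne0 : 0 <= Ne := l2norm_ge0 _.
case/andP: hp => hp1 hp2; case/andP: hq => hq1 hq2.
have key : (p + q) * Na <= 2 * Ne.
  have [Nbz|Nbnz] := eqVneq Nb 0.
    have Ncz : Nc = 0 := sys0 sC cC Lu2 T0 Nbz.
    rewrite Ncz addr0 in tri1; exact: A1.
  have Nbp : 0 < Nb by rewrite lt_neqAle eq_sym Nbnz.
  have h1 := A3 Nbp angP angC lin cse.
  exact: A2 hq1 hq2 Ne0 h1 tri1 tri2.
have NaK : Na <= K * Ne.
  by rewrite /K mulrAC ler_pdivlMr // mulrC.
have NbK : Nb <= k * Na.
  have [Naz|Nanz] := eqVneq Na 0.
    by rewrite Nbb' (sys0 sP cP Lu1 T0 Naz) Naz mulr0.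
  rewrite Nbb'.
  have ca := cP T u1 T0 Lu1.
  have LPa := hsP _ (Lu1 T T0).
  have Lta := L2ep_L2 (PLP _ (L2ep_trunc Lu1 T0)) T0.
  rewrite (norm_ae (L2_mc Lb') (L2_mc Lta) ca).
  apply: le_trans (trunc_le (proj1 LPa) Lta) _.
  have := hcp _ (Lu1 T T0) Nanz.
  have Nap : 0 < Na by rewrite lt_neqAle eq_sym Nanz.
  rewrite ler_pdivrMr // => h; apply: le_trans h _.
  by rewrite ler_wpM2r.
apply: le_trans (A4 Na0 Nb0) _; exact: A5 NbK k0 NaK Ne0.
Qed.
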